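(* For any prime $p\ge5$, any integer $\alpha\ge0$ and any integer $n\ge0$, \[ b_2\!\left(p^{2\alpha+1}n+\frac{(24j+1)p^{2\alpha}-1}{24}\right)\equiv 0 \pmod 2 \] for every integer $j$ with $0\le j\le p-1$ and $\left(\frac{24j+1}{p}\right)=-1$.
   Context: For a positive integer $\ell$, $b_\ell(n)$ denotes the number of partitions of $n$ having no part divisible by $\ell$. $\left(\frac{a}{p}\right)$ is the Legendre symbol. *)

(* Defs.v *)
From mathcomp Require Import all_boot all_algebra.
Set Implicit Arguments. Unset Strict Implicit. Unset Printing Implicit Defensive.

(* A partition of n is encoded by its multiplicity function: m i = number of
   parts equal to i.+1, for i < n (parts are at most n, multiplicities at most n). *)
Definition is_partition_mult (n : nat) (m : {ffun 'I_n -> 'I_n.+1}) : bool :=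
  \sum_(i < n) (i.+1 * m i) == n.

Definition b (ell n : nat) : nat :=
  #|[set m : {ffun 'I_n -> 'I_n.+1} | is_partition_mult m &
      [forall i : 'I_n, (ell %| i.+1) ==> (nat_of_ord (m i) == 0)]]|.

Definition legendre (p a : nat) : int :=
  if p %| a then (0%:Z)%R
  else if [exists x : 'I_p, (x * x == a %[mod p])] then (1%:Z)%R
  else (-1)%R.

(* Main.v *)
Require Import Defs.
From mathcomp Require Import all_boot all_algebra.
From mathcomp Require Import all_order ring zify.
Set Implicit Arguments. Unset Strict Implicit. Unset Printing Implicit Defensive.
Import GRing.Theory.
Local Open Scope ring_scope.

Fixpoint tri (k : nat) : nat := match k with 0 => 0 | k'.+1 => (tri k' + k'.+1)%N end.

Section Shanks.
Variable R : comNzRingType.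
Local Notation X := ('X : {poly R}).

Definition Rp (n k : nat) : {poly R} := \prod_(k.+1 <= i < n.+1) (1 - X ^+ i).
Definition tt (n k : nat) : {poly R} := (-1) ^+ k * Rp n k * X ^+ (tri k + k * n).
Definition S (n : nat) : {poly R} := \sum_(k < n.+1) tt n k.
Definition e1 (j : nat) : nat := (tri j + j * j - j)%N.
Definition e2 (j : nat) : nat := (tri j + j * j)%N.
Definition Pent (n : nat) : {poly R} :=
  \sum_(j < n.+1) (-1) ^+ j * (X ^+ e1 j + X ^+ e2 j) - 1.

Lemma Rp_rec n k : (k <= n)%N -> Rp n.+1 k = Rp n k * (1 - X ^+ n.+1).
Proof. by move=> h; rewrite /Rp big_nat_recr. Qed.

Lemma Rp_lt n k : (k < n)%N -> Rp n k = (1 - X ^+ k.+1) * Rp n k.+1.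
Proof. by move=> h; rewrite /Rp big_ltn. Qed.

Lemma Rp_nn n : Rp n n = 1.
Proof. by rewrite /Rp big_geq. Qed.

Lemma tri_ge j : (j <= tri j)%N.
Proof. elim: j => //= j IH; by rewrite addnS ltnS leq_addl. Qed.

Lemma S_rec n : S n.+1 = S n + (-1) ^+ n.+1 * (X ^+ e1 n.+1 + X ^+ e2 n.+1).
Proof.
pose B k := (-1) ^+ k * Rp n k * X ^+ (tri k + k.+1 * n.+1).
pose A k := (-1) ^+ k * Rp n k * X ^+ (tri k + k * n.+1).
have h1 : forall k : 'I_n.+1, tt n.+1 k = A k - B k.
  move=> k; rewrite /tt /A /B Rp_rec; last by rewrite -ltnS.
  have -> : (tri k + k.+1 * n.+1 = tri k + k * n.+1 + n.+1)%N by lia.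
  rewrite !exprD; ring.
have h2 : forall k : 'I_n, A k.+1 - tt n k.+1 = B k.
  move=> k; rewrite /A /B /tt (@Rp_lt n k) //.
  set u := (tri k + k.+1 * n)%N.
  have -> : (tri k.+1 + k.+1 * n.+1 = u + k.+1 + k.+1)%N by rewrite /u /=; lia.
  have -> : (tri k.+1 + k.+1 * n = u + k.+1)%N by rewrite /u /=; lia.
  have -> : (tri k + k.+1 * n.+1 = u + k.+1)%N by rewrite /u /=; lia.
  rewrite !exprD exprS; ring.
rewrite /S big_ord_recr /=.
have -> : \sum_(i < n.+1) tt n.+1 i = \sum_(i < n.+1) tt n i +
     \sum_(i < n.+1) (A i - tt n i) - \sum_(i < n.+1) B i.
  rewrite -addrA -sumrB -big_split /=; apply: eq_bigr => i _; rewrite h1; ring.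
have h3 : \sum_(i < n.+1) (A i - tt n i) = \sum_(i < n) B i.
  rewrite big_ord_recl /=.
  have -> : A 0%N = tt n 0 by [].
  rewrite subrr add0r; apply: eq_bigr => i _; exact: h2.
rewrite h3 [\sum_(i < n.+1) B i]big_ord_recr /= /B Rp_nn.
rewrite /tt Rp_nn /e1 /e2 /=.
have -> : (tri n + n.+1 + n.+1 * n.+1 - n.+1 = tri n + n.+1 * n.+1)%N.
  by rewrite addnAC addnK.
rewrite !exprS; ring.
Qed.

Lemma S_closed n : S n = Pent n.
Proof.
elim: n => [|n IH].
  by rewrite /S /Pent !big_ord1 /tt /e1 /e2 /= Rp_nn !expr0; ring.
rewrite S_rec IH /Pent [in RHS]big_ord_recr /=; ring.
Qed.

End Shanks.


Section Eqm.
Variable R : comNzRingType.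
Local Notation X := ('X : {poly R}).
Definition eqm (t : nat) (p q : {poly R}) := exists r, p = q + X ^+ t * r.

Lemma eqm_refl t p : eqm t p p.
Proof. by exists 0; rewrite mulr0 addr0. Qed.
Lemma eqm_sym t p q : eqm t p q -> eqm t q p.
Proof. by case=> r ->; exists (- r); ring. Qed.
Lemma eqm_trans t p q s : eqm t p q -> eqm t q s -> eqm t p s.
Proof. by case=> r -> [r' ->]; exists (r + r'); ring. Qed.
Lemma eqm_mul t p q p' q' : eqm t p q -> eqm t p' q' -> eqm t (p * p') (q * q').
Proof. by case=> r -> [r' ->]; exists (q * r' + r * q' + X ^+ t * r * r'); ring. Qed.
Lemma eqm_weak t t' p q : (t' <= t)%N -> eqm t p q -> eqm t' p q.
Proof.
move=> h [r ->]; exists (X ^+ (t - t') * r).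
by rewrite mulrA -exprD subnKC.
Qed.
Lemma eqm_coef t p q i : eqm t p q -> (i < t)%N -> p`_i = q`_i.
Proof. by case=> r -> h; rewrite coefD coefXnM h addr0. Qed.
Lemma eqm_X t k : (t <= k)%N -> eqm t (1 + X ^+ k) 1.
Proof. by move=> h; exists (X ^+ (k - t)); rewrite -exprD subnKC. Qed.
Lemma eqm_prod t (I : Type) (r : seq I) (P : pred I) (F : I -> {poly R}) :
  (forall i, P i -> eqm t (F i) 1) -> eqm t (\prod_(i <- r | P i) F i) 1.
Proof.
move=> h; apply: (big_ind (fun x => eqm t x 1)); first exact: eqm_refl.
  by move=> x y hx hy; rewrite -(mulr1 1); apply: eqm_mul.
exact: h.
Qed.

Lemma eqm_add t p q p' q' : eqm t p q -> eqm t p' q' -> eqm t (p + p') (q + q').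
Proof. by case=> r -> [r' ->]; exists (r + r'); ring. Qed.
Lemma eqm_sum t (I : Type) (r : seq I) (P : pred I) (F : I -> {poly R}) :
  (forall i, P i -> eqm t (F i) 0) -> eqm t (\sum_(i <- r | P i) F i) 0.
Proof.
move=> h; apply: (big_ind (fun x => eqm t x 0)); first exact: eqm_refl.
  by move=> x y hx hy; rewrite -(addr0 0); apply: eqm_add.
exact: h.
Qed.

Lemma S_trunc n : eqm n.+1 (S R n) (Rp R n 0).
Proof.
rewrite /S big_ord_recl /=.
have -> : tt R n 0 = Rp R n 0 by rewrite /tt /= expr0 mul1r mulr1.
have h : forall i : 'I_n, exists r, tt R n (bump 0 i) = X ^+ n.+1 * r.
  move=> i; exists ((-1) ^+ i.+1 * Rp R n i.+1 * X ^+ (tri i + i + i * n)).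
  rewrite /tt /bump /= !add1n add0n.
  have -> : (tri i + i.+1 + i.+1 * n = n.+1 + (tri i + i + i * n))%N by lia.
  rewrite exprD; ring.
rewrite -[X in eqm _ _ X]addr0; apply: eqm_add; first exact: eqm_refl.
apply: eqm_sum => i _; have [r ->] := h i; exists r; ring.
Qed.

Lemma Rp_Pent n i : (i <= n)%N -> (Rp R n 0)`_i = (Pent R n)`_i.
Proof.
move=> h; rewrite -S_closed; apply/esym/(eqm_coef (S_trunc n)).
by rewrite ltnS.
Qed.

End Eqm.


Local Notation F := 'F_2.
Local Notation X := ('X : {poly F}).

Lemma oppF2 (p : {poly F}) : - p = p.
Proof.
have h : (-1 : {poly F}) = 1.
  by rewrite -polyCN -[RHS]/(1%:P); congr (_%:P); apply/val_inj.
by rewrite -mulN1r h mul1r.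
Qed.

Lemma twoF2 (p : {poly F}) : p + p = 0.
Proof. by rewrite -{1}(oppF2 p) addNr. Qed.

Lemma sqrF2 (p q : {poly F}) : (p + q) ^+ 2 = p ^+ 2 + q ^+ 2.
Proof.
have -> : (p + q) ^+ 2 = p ^+ 2 + q ^+ 2 + (p * q + p * q) by ring.
by rewrite twoF2 addr0.
Qed.

Definition Pp (N : nat) : {poly F} := \prod_(1 <= m < N.+1) (1 + X ^+ m).
Definition Op (N : nat) : {poly F} := \prod_(1 <= m < N.+1 | odd m) (1 + X ^+ m).
Definition Qp (N : nat) : {poly F} := \prod_(1 <= m < N.+1 | ~~ odd m) (1 + X ^+ m).

Lemma PpOQ N : Pp N = Op N * Qp N.
Proof. by rewrite /Pp (bigID odd). Qed.

Lemma Qp_rec N : Qp N.+1 = Qp N * (if odd N.+1 then 1 else 1 + X ^+ N.+1).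
Proof.
rewrite /Qp big_mkcond big_nat_recr //= -big_mkcond /=.
by case: (odd N).
Qed.

Lemma Qp_half t : Qp t.*2 = Pp t ^+ 2 /\ Qp t.*2.+1 = Pp t ^+ 2.
Proof.
elim: t => [|t [IH1 IH2]].
  have h0 : Qp 0 = 1 by rewrite /Qp big_geq.
  have p0 : Pp 0 = 1 by rewrite /Pp big_geq.
  by split; [rewrite /= h0 p0 expr1n | rewrite Qp_rec /= h0 p0 expr1n mulr1].
have e1 : Qp t.*2.+2 = Pp t.+1 ^+ 2.
  rewrite Qp_rec IH2 /= odd_double /= /Pp [in RHS]big_nat_recr //= exprMn sqrF2 expr1n.
  by rewrite -exprM muln2.
by split; [rewrite doubleS e1 | rewrite doubleS Qp_rec e1 /= odd_double mulr1].
Qed.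

Lemma half_eq N : (N = odd N + N./2 * 2)%N.
Proof. by rewrite muln2 odd_double_half. Qed.

Lemma Qp_halfN N : Qp N = Pp N./2 ^+ 2.
Proof.
rewrite {1}[N]half_eq muln2; case: (odd N); rewrite ?add1n ?add0n; apply Qp_half.
Qed.

Lemma OP N : eqm N.+1 (Op N * Pp N) 1.
Proof.
elim/ltn_ind: N => N IH.
case: N IH => [|N] IH.
  by rewrite /Op /Pp !big_geq // mulr1; apply: eqm_refl.
set h := N.+1./2.
have hN := half_eq N.+1; rewrite -/h in hN.
have hb : (odd N.+1 <= 1)%N by case: (odd _).
have hlt : (h < N.+1)%N by lia.
have e1 : eqm h.+1 (Op N.+1) (Op h).
  rewrite /Op (@big_cat_nat _ _ _ h.+1) /=; try lia.
  rewrite -[X in eqm _ _ X]mulr1; apply: eqm_mul; first exact: eqm_refl.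
  rewrite big_nat_cond; apply: eqm_prod => m /andP [/andP [hm _] _].
  exact: eqm_X.
have [r hr] : eqm h.+1 (Op N.+1 * Pp h) 1.
  apply: eqm_trans (IH h hlt); apply: eqm_mul => //; exact: eqm_refl.
have -> : Op N.+1 * Pp N.+1 = (Op N.+1 * Pp h) ^+ 2.
  by rewrite PpOQ Qp_halfN -/h; ring.
rewrite hr sqrF2 expr1n exprMn -exprM.
exists ('X ^+ (h.+1 * 2 - N.+2) * r ^+ 2); rewrite mulrA -exprD; congr (_ + _ ^+ _ * _).
lia.
Qed.

Definition Hm (N k : nat) : {poly F} := \sum_(j < N.+1) X ^+ (k * j).
Definition G (N : nat) : {poly F} := \prod_(1 <= m < N.+1 | odd m) Hm N m.

Lemma HmX N k : Hm N k * (1 + X ^+ k) = 1 + X ^+ (k * N.+1).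
Proof.
have h := subrX1 (X ^+ k) N.+1.
rewrite !oppF2 -exprM in h.
rewrite [RHS]addrC h mulrC [X ^+ k + _]addrC; congr (_ * _).
by apply: eq_bigr => i _; rewrite exprM.
Qed.

Lemma GO N : eqm N.+1 (G N * Op N) 1.
Proof.
rewrite /G /Op -big_split /= big_nat_cond; apply: eqm_prod => m /andP [/andP [hm _] _].
rewrite HmX; apply: eqm_X; exact: leq_pmull.
Qed.

Lemma GP N : eqm N.+1 (G N) (Pp N).
Proof.
apply: (@eqm_trans _ _ _ (G N * (Op N * Pp N))).
  rewrite -[X in eqm _ X _]mulr1; apply: eqm_mul; first exact: eqm_refl.
  exact/eqm_sym/OP.
rewrite mulrA -[X in eqm _ _ X]mul1r; apply: eqm_mul; first exact: GO.
exact: eqm_refl.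
Qed.

Lemma PpRp N : Pp N = Rp F N 0.
Proof. by rewrite /Pp /Rp; apply: eq_bigr => i _; rewrite oppF2. Qed.

Lemma G_coef N : (G N)`_N = (Pent F N)`_N.
Proof. by rewrite (eqm_coef (GP N)) // PpRp Rp_Pent. Qed.



Definition Fij N (i : 'I_N) (j : 'I_N.+1) : {poly F} :=
  if (2 %| i.+1)%N && (j != 0 :> nat) then 0 else X ^+ (i.+1 * j).

Lemma sumFij N (i : 'I_N) :
  \sum_(j < N.+1) Fij i j = if odd i.+1 then Hm N i.+1 else 1.
Proof.
rewrite /Fij dvdn2; case: (odd i.+1) => /=.
  by [].
rewrite big_ord_recl /= muln0 expr0 big1 ?addr0 //.
Qed.

Lemma prodFij N : \prod_(i < N) \sum_(j < N.+1) Fij i j = G N.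
Proof.
under eq_bigr do rewrite sumFij.
rewrite /G big_add1 /= big_mkord.
by rewrite [RHS]big_mkcond.
Qed.

Lemma prodX (I : finType) (a : I -> nat) : \prod_i X ^+ (a i) = X ^+ (\sum_i a i).
Proof. by rewrite (big_morph (fun n => X ^+ n) (exprD X) (expr0 X)). Qed.

Lemma count_coef N : ((b 2 N)%:R : F) = (G N)`_N.
Proof.
rewrite -prodFij bigA_distr_bigA /= coef_sum.
pose c (f : {ffun 'I_N -> 'I_N.+1}) :=
  [forall i : 'I_N, (2 %| i.+1)%N ==> (nat_of_ord (f i) == 0%N)].
have h : forall f : {ffun 'I_N -> 'I_N.+1},
   (\prod_(i < N) Fij i (f i))`_N = ((c f && (\sum_(i < N) (i.+1 * f i) == N)%N) : nat)%:R.
  move=> f; case cf: (c f) => /=.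
    rewrite (@eq_bigr _ _ _ _ _ _ _ (fun i : 'I_N => X ^+ (i.+1 * f i))); last first.
      move=> i _; rewrite /Fij; move/forallP: cf => /(_ i).
      by case: (2 %| i.+1)%N => //= /eqP ->.
    by rewrite prodX coefXn eq_sym.
  have := negbT cf; move=> /forallPn [i]; rewrite negb_imply => /andP [h2 hi].
  by rewrite (bigD1 i) //= /Fij h2 hi mul0r coef0.
under eq_bigr do rewrite h.
rewrite -natr_sum /b; congr (_%:R).
rewrite cardE /enum_mem size_filter -sum1_count -big_filter.
rewrite big_filter big_mkcond /=; apply: eq_bigr => f _.
by rewrite inE /is_partition_mult andbC /c; case: (_ && _).
Qed.



Lemma tri2 j : (2 * tri j = j * j.+1)%N.
Proof. elim: j => //= j IH; nia. Qed.

Lemma Pent_coef0 N : (forall x, (x * x != 24 * N + 1)%N) -> (Pent F N)`_N = 0.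
Proof.
move=> hN.
have N0 : (N != 0)%N by apply/eqP => N0; have := hN 1%N; rewrite N0.
rewrite /Pent coefB coef_sum coefC (negbTE N0) subr0 big1 // => [[j hj]] _ /=.
have t2 := tri2 j.
have h1 : (N == e1 j) = false.
  apply/eqP => E; case: (j) t2 E => [|j'] t2' E.
    by rewrite E /e1 /= in N0.
  have := hN (6 * j'.+1 - 1)%N; rewrite E /e1 => /eqP; apply; nia.
have h2 : (N == e2 j) = false.
  apply/eqP => E; have := hN (6 * j + 1)%N; rewrite E /e2 => /eqP; apply; nia.
rewrite -signr_odd mulr_sign; case: (odd j);
  by rewrite ?coefN coefD !coefXn h1 h2 addr0 ?oppr0.
Qed.

Local Close Scope ring_scope.

Lemma p2mod p : prime p -> 5 <= p -> p ^ 2 %% 24 = 1.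
Proof.
move=> pp p5.
have op : odd p by case: (even_prime pp) => // E; rewrite E in p5.
have n3 : ~~ (3 %| p).
  by apply/negP => /(@prime_nt_dvdP 3 p pp isT) E; rewrite -E in p5.
have o2 : p %% 24 %% 2 = 1 by rewrite modn_dvdm // modn2 op.
have t3 : p %% 24 %% 3 != 0 by rewrite modn_dvdm // -/(dvdn 3 p).
rewrite -modnXm.
have : p %% 24 < 24 by rewrite ltn_pmod.
move: (p %% 24) o2 t3; do 24! case=> //.
Qed.

Lemma p2amod p a : prime p -> 5 <= p -> p ^ (2 * a) %% 24 = 1.
Proof.
by move=> pp p5; rewrite expnM -modnXm p2mod // exp1n.
Qed.

Lemma nosq p a n j : prime p -> 5 <= p -> legendre p (24 * j + 1) = (-1)%R ->
  forall x, x * x != 24 * (p ^ (2 * a + 1) * n + ((24 * j + 1) * p ^ (2 * a) - 1) %/ 24) + 1.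
Proof.
move=> pp p5 hl x; apply/eqP => hx.
set A := (24 * j + 1) * p ^ (2 * a) in hx.
have Am : A %% 24 = 1 by rewrite /A -modnMm p2amod // muln1 modn_mod mulnC modnMDl.
have hA := divn_eq A 24; rewrite Am in hA.
have e : (A - 1) %/ 24 = A %/ 24 by rewrite {1}hA addnK mulnK.
rewrite e in hx.
set M := 24 * p * n + 24 * j + 1.
have hxM : x * x = p ^ (2 * a) * M.
  rewrite hx mulnDr -addnA [24 * (A %/ 24)]mulnC -hA /A /M expnD expn1; ring.
have pg : 0 < p by apply: prime_gt0.
have Mg : 0 < M by rewrite /M addn1.
have xg : 0 < x.
  have : 0 < x * x by rewrite hxM muln_gt0 expn_gt0 pg Mg.
  by rewrite muln_gt0 andbb.
have hl2 : a <= logn p x.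
  have := congr1 (logn p) hxM; rewrite lognM // lognM ?expn_gt0 ?pg // pfactorK //.
  lia.
have := pfactor_dvdn a pp xg; rewrite hl2 => /dvdnP [y hy].
have hyM : y * y = M.
  apply/eqP; rewrite -(@eqn_pmul2r (p ^ (2 * a))) ?expn_gt0 ?pg //.
  apply/eqP; rewrite hy in hxM; rewrite [RHS]mulnC -hxM mul2n -addnn expnD; ring.
move: hl; rewrite /legendre.
case: ifP => [_ | hd]; first by [].
case: ifP => [_ | /negbT hne]; first by [].
move=> _; move/existsP: hne; apply; exists (Ordinal (ltn_pmod y pg)) => /=.
rewrite modnMm hyM /M.
have -> : 24 * p * n + 24 * j + 1 = (24 * n) * p + (24 * j + 1) by ring.
by rewrite modnMDl.
Qed.


Theorem theorem3p3 (p alpha n j : nat) :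
  prime p -> 5 <= p -> j <= p - 1 -> legendre p (24 * j + 1) = (-1)%R ->
  b 2 (p ^ (2 * alpha + 1) * n + ((24 * j + 1) * p ^ (2 * alpha) - 1) %/ 24) %% 2 = 0.
Proof.
move=> pp p5 _ hl.
set N := (p ^ (2 * alpha + 1) * n + ((24 * j + 1) * p ^ (2 * alpha) - 1) %/ 24).
have h0 := @nosq p alpha n j pp p5 hl.
have c : (((b 2 N)%:R)%R : 'F_2) = 0%R by rewrite count_coef G_coef Pent_coef0.
have h := val_Fp_nat (isT : prime 2) (b 2 N); rewrite c in h.
by rewrite -h.
Qed.
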